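(* Let $(\mathcal G,p)$ be a CPS on the finite set $\Omega$ with $\mathcal G$ closed under unions and nonempty intersections and covering $\Omega$. Let $G\in\mathcal G$, let $\mu_1,\dots,\mu_K$ be the distinct $\mathcal G$-atoms contained in $G$, let $E$ be an event and $q\in[0,1]$. If $p_{\mu_j}(E)=q$ for all $j=1,\dots,K$, then $p_G(E)=q$.
   Context: A CPS is a pair $(\mathcal G,p)$ where $\mathcal G$ is a family of nonempty subsets of $\Omega$ and $p$ assigns to each $G\in\mathcal G$ a probability measure $p_G$ on $\Omega$ with $p_G(G)=1$ and $p_G(E)=p_G(F)p_F(E)$ whenever $E\subseteq F\subseteq G$, $F,G\in\mathcal G$. The $\mathcal G$-atoms are the sets $m(\omega)=\bigcap\{H\in\mathcal G:\omega\in H\}$ for $\omega\in\Omega$; each belongs to $\mathcal G$. *)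

(* Defs.v *)
(* A probability measure on Omega is represented by its mass
   function {ffun Omega -> R} (nonnegative, total mass 1); its value on an
   event E is the sum of masses over E. *)
From mathcomp Require Import all_boot all_order all_algebra.
Set Implicit Arguments. Unset Strict Implicit. Unset Printing Implicit Defensive.
Import Order.TTheory GRing.Theory Num.Theory.
Local Open Scope ring_scope.

Definition prob {R : realFieldType} {Omega : finType}
  (f : {ffun Omega -> R}) (E : {set Omega}) : R := \sum_(w in E) f w.

Definition is_prob {R : realFieldType} {Omega : finType} (f : {ffun Omega -> R}) : Prop :=
  (forall w, 0 <= f w) /\ \sum_w f w = 1.

Definition CPS {R : realFieldType} {Omega : finType}
  (Gfam : {set {set Omega}}) (p : {set Omega} -> {ffun Omega -> R}) : Prop :=
  (forall G, G \in Gfam -> G != set0) /\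
  (forall G, G \in Gfam -> is_prob (p G)) /\
  (forall G, G \in Gfam -> prob (p G) G = 1) /\
  (forall E F G : {set Omega}, F \in Gfam -> G \in Gfam ->
     E \subset F -> F \subset G ->
     prob (p G) E = prob (p G) F * prob (p F) E).

Definition atom {Omega : finType} (Gfam : {set {set Omega}}) (w : Omega) : {set Omega} :=
  \bigcap_(H in Gfam | w \in H) H.

(* Main.v *)
Require Import Defs.
From mathcomp Require Import all_boot all_order all_algebra.
From mathcomp Require Import ring.
Import Order.TTheory GRing.Theory Num.Theory.
Local Open Scope ring_scope.

Section Aux.
Variables (R : realFieldType) (Omega : finType).
Implicit Types (f : {ffun Omega -> R}) (A B E : {set Omega}).

Lemma probID f A B : prob f A = prob f (A :&: B) + prob f (A :\: B).
Proof. by rewrite /prob (big_setID B). Qed.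

Lemma probU f A B : prob f (A :|: B) + prob f (A :&: B) = prob f A + prob f B.
Proof.
rewrite (probID f (A :|: B) B) (probID f A B).
have -> : (A :|: B) :&: B = B by rewrite setIC setKU.
have -> : (A :|: B) :\: B = A :\: B by rewrite setDUl setDv setU0.
by ring.
Qed.

Lemma prob_ge0 f A : is_prob f -> 0 <= prob f A.
Proof. by case=> h _; rewrite /prob; apply: sumr_ge0. Qed.

Lemma probI1 f A E : is_prob f -> prob f A = 1 -> prob f (E :&: A) = prob f E.
Proof.
move=> hp hA.
rewrite (probID f E A).
suff -> : prob f (E :\: A) = 0 by rewrite addr0.
have h0 : 0 <= prob f (E :\: A) by apply: prob_ge0.
have hT : prob f setT = 1 by case: hp => _ <-; rewrite /prob; apply: eq_bigl => w; rewrite inE.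
have h1 : prob f (~: A) = 0.
  have := probID f setT A; rewrite hT setTI hA setTD => h.
  by apply: (@addrI _ 1); rewrite addr0 -h.
have h2 : prob f (E :\: A) <= prob f (~: A).
  rewrite (probID f (~: A) E).
  have -> : ~: A :&: E = E :\: A by rewrite setDE setIC.
  by rewrite lerDl; apply: prob_ge0.
by apply/eqP; rewrite eq_le h0 andbT -h1.
Qed.
End Aux.

Lemma in_bigcup_seq (T I : finType) (s : seq I) (F : I -> {set T}) z :
  (z \in \bigcup_(y <- s) F y) = has (fun y => z \in F y) s.
Proof. by elim: s => [|a s IH]; rewrite ?big_nil ?big_cons ?inE //= IH. Qed.

Theorem lemma6 (R : realFieldType) (Omega : finType)
  (Gfam : {set {set Omega}}) (p : {set Omega} -> {ffun Omega -> R}) :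
  CPS Gfam p ->
  (forall H1 H2, H1 \in Gfam -> H2 \in Gfam -> H1 :|: H2 \in Gfam) ->
  (forall H1 H2, H1 \in Gfam -> H2 \in Gfam -> H1 :&: H2 != set0 ->
     H1 :&: H2 \in Gfam) ->
  (forall w : Omega, exists2 H, H \in Gfam & w \in H) ->
  forall (G : {set Omega}) (E : {set Omega}) (q : R),
  G \in Gfam -> 0 <= q <= 1 ->
  (forall w : Omega, atom Gfam w \subset G -> prob (p (atom Gfam w)) E = q) ->
  prob (p G) E = q.
Proof.
move=> [hne [hprob [hfull hmul]]] hU hI hcov G E q hG hq hat.
have atom_in w : w \in atom Gfam w.
  by apply/bigcapP => H /andP[].
have atom_sub w H : H \in Gfam -> w \in H -> atom Gfam w \subset H.
  by move=> hH hw; apply: (@bigcap_inf _ _ H (fun H => (H \in Gfam) && (w \in H))); rewrite hH hw.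
have atom_G w : atom Gfam w \in Gfam.
  case: (hcov w) => H0 hH0 hw0.
  have : (w \in atom Gfam w) && ((atom Gfam w == setT) || (atom Gfam w \in Gfam)).
    rewrite /atom; apply: (big_ind (fun X : {set Omega} => (w \in X) && ((X == setT) || (X \in Gfam)))).
    - by rewrite inE eqxx.
    - move=> X Y /andP[hX hX'] /andP[hY hY']; rewrite inE hX hY /=.
      case/orP: hX' => [/eqP->|hX']; first by rewrite setTI hY'.
      case/orP: hY' => [/eqP->|hY']; first by rewrite setIT hX' orbT.
      by rewrite hI ?orbT //; apply/set0Pn; exists w; rewrite inE hX hY.
    - by move=> H /andP[-> ->]; rewrite orbT.
  case/andP=> _ /orP[/eqP hT|//].
  have hs := atom_sub w H0 hH0 hw0.
  have hT2 : atom Gfam w = setT by exact: hT.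
  suff hH : H0 = setT by rewrite hH in hH0; move: hH0; rewrite -hT2.
  by apply/eqP; rewrite eqEsubset subsetT -hT2 hs.
have hpG := hprob G hG.
have key : forall n (X : {set Omega}), (#|X| <= n)%N -> X \in Gfam -> X \subset G ->
    prob (p G) (E :&: X) = q * prob (p G) X.
  elim=> [|n IH] X hn hX hXG.
    by have /set0Pn[w hw] := hne X hX; move: hn; rewrite leqn0 cards_eq0 => /eqP hX0; rewrite hX0 inE in hw.
  case: (boolP [exists x in X, atom Gfam x == X]).
    case/exists_inP => x hx /eqP hxX.
    rewrite (hmul (E :&: X) X G hX hG (subsetIr _ _) hXG).
    rewrite (@probI1 _ _ _ _ E (hprob X hX) (hfull X hX)).
    by rewrite -hxX hat 1?mulrC // hxX.
  rewrite negb_exists_in => /forall_inP hna.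
  have hprop y : y \in X -> atom Gfam y \proper X.
    by move=> hy; rewrite properEneq hna // atom_sub.
  have IH' Z : Z \in Gfam -> (#|Z| < #|X|)%N -> Z \subset X ->
      prob (p G) (E :&: Z) = q * prob (p G) Z.
    move=> hZ hc hZX; apply: IH => //; last exact: subset_trans hZX hXG.
    by rewrite -ltnS; apply: leq_trans hc hn.
  have inner : forall s : seq Omega, all (fun y => y \in X) s ->
      let Y := \bigcup_(y <- s) atom Gfam y in
      (Y == set0) || ((Y \in Gfam) && (prob (p G) (E :&: Y) == q * prob (p G) Y)).
    elim=> [|y s IHs] /=; first by rewrite big_nil eqxx.
    case/andP=> hy hs; rewrite big_cons.
    set A := atom Gfam y; set B := \bigcup_(y <- s) atom Gfam y.
    have hA := hprop y hy.
    have hAX : A \subset X by apply: proper_sub.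
    have hAc : (#|A| < #|X|)%N by apply: proper_card.
    have hApr : prob (p G) (E :&: A) = q * prob (p G) A by apply: IH' => //; exact: atom_G.
    case/orP: (IHs hs) => [/eqP hB0 | /andP[hB /eqP hBpr]].
      rewrite -/B in hB0.
      by rewrite hB0 setU0 /A atom_G hApr eqxx orbT.
    rewrite -/B in hB hBpr.
    apply/orP; right; rewrite hU //=; last exact: atom_G.
    have hBX : B \subset X.
      by apply/subsetP => z; rewrite in_bigcup_seq => /hasP[y' hy' hz];
        apply: (subsetP (proper_sub (hprop y' _))) => //; exact: (allP hs).
    have hE : prob (p G) (E :&: (A :&: B)) = q * prob (p G) (A :&: B).
      case: (eqVneq (A :&: B) set0) => [->|hne0].
        by rewrite setI0 /prob !big_set0 mulr0.
      apply: IH'; first by apply: hI => //; exact: atom_G.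
      - by apply: leq_ltn_trans hAc; apply: subset_leq_card; apply: subsetIl.
      - by apply: subset_trans hAX; apply: subsetIl.
    have e1 := @probU _ _ (p G) (E :&: A) (E :&: B).
    have e2 := @probU _ _ (p G) A B.
    rewrite -setIUr in e1.
    have hEE : E :&: A :&: (E :&: B) = E :&: (A :&: B) by rewrite setIACA setIid.
    rewrite hEE in e1.
    rewrite hApr hBpr hE in e1.
    apply/eqP; apply: (@addIr _ (q * prob (p G) (A :&: B))).
    by rewrite e1 -!mulrDr e2.
  have hall : all (fun y => y \in X) (enum X) by apply/allP => y; rewrite mem_enum.
  have hYX : \bigcup_(y <- enum X) atom Gfam y = X.
    apply/setP => z; rewrite in_bigcup_seq; apply/hasP/idP.
      by case=> y; rewrite mem_enum => hy hz; apply: (subsetP (proper_sub (hprop y hy))).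
    by move=> hz; exists z; rewrite ?mem_enum.
  have := inner _ hall; rewrite /= hYX.
  by case/orP => [/eqP h0|/andP[_ /eqP //]]; move: (hne X hX); rewrite h0 eqxx.
rewrite -(@probI1 _ _ _ _ E hpG (hfull G hG)).
by rewrite (key #|G|) // hfull // mulr1.
Qed.
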